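(* For every integer $n\ge 1$, $$\sum_{m=0}^{n-1}(3m+1)(-16)^{n-m-1}\binom{2m}{m} f_m=\binom{2n}{n}\sum_{k=0}^{n-1}\binom{n+2k}{3k}\binom{3k}{k}\binom{2k}{k}\frac{n(k-n)(-4)^{n-k}}{8(2k+1)}.$$
   Context: The Franel numbers are defined by $f_n=\sum_{k=0}^n \binom{n}{k}^3$ for integers $n\ge 0$. Binomial coefficients $\binom{a}{b}$ for nonnegative integers $a,b$ are the usual ones, with $\binom{a}{b}=0$ when $b>a$. *)

(* Defs.v *)
From HB Require Import structures.
From mathcomp Require Import all_boot all_order all_algebra.
Set Implicit Arguments. Unset Strict Implicit. Unset Printing Implicit Defensive.

Definition franel (n : nat) : nat := \sum_(0 <= k < n.+1) 'C(n, k) ^ 3.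

(* Main.v *)
Require Import Defs.
From HB Require Import structures.
From mathcomp Require Import all_boot all_order all_algebra.
From mathcomp Require Import ring lra zify.
Import GRing.Theory Num.Theory.
Local Open Scope ring_scope.

Definition Fr (a : nat) : rat := (a`!)%:R.
Lemma Fr_neq0 a : Fr a != 0.
Proof. by rewrite /Fr pnatr_eq0 -lt0n fact_gt0. Qed.
Lemma FrS a : Fr a.+1 = a.+1%:R * Fr a.
Proof. by rewrite /Fr factS natrM. Qed.
Lemma binR a b : ('C(a + b, a))%:R = Fr (a + b) / (Fr a * Fr b) :> rat.
Proof.
have := bin_fact (leq_addr b a); rewrite addKn => /(congr1 (fun x => x%:R : rat)).
rewrite !natrM -/(Fr _) -/(Fr _) -/(Fr _) => <-.
by field; rewrite !pnatr_eq0 -!lt0n !fact_gt0.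
Qed.
Ltac nzs := repeat (apply/andP; split);
  repeat (first [rewrite nat1r | rewrite natr1 | rewrite -natrD | rewrite -natrM]);
  rewrite ?pnatr_eq0 -?lt0n ?fact_gt0 //; try lia.
Lemma Fr0 : Fr 0 = 1. Proof. by rewrite /Fr. Qed.
Lemma binR' x y : (y <= x)%N -> ('C(x, y))%:R = Fr x / (Fr y * Fr (x - y)) :> rat.
Proof. by move=> h; have := binR y (x - y); rewrite subnKC. Qed.

Definition ft n k : rat := ('C(n,k)%:R)^+3.
Definition pF (N k : rat) : rat := 4*(k-1)^+3 + N*(-22 + 39*k - 18*k^+2) + N^+2*(-32+27*k) - 14 * N^+3.
Definition GF N k : rat := if (0 < k)%N && (k <= N.+1)%N then
  (Fr N)^+3 / ((Fr k.-1)^+3 * (Fr (N.+1 - k))^+3) * pF N%:R k%:R / N%:R else 0.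

Lemma franel_step N k : (0 < N)%N -> (k <= N.+1)%N ->
 (N.+1%:R)^+2 * ft N.+1 k - (7*N%:R^+2 + 7*N%:R + 2) * ft N k - 8 * N%:R^+2 * ft N.-1 k
  = GF N k.+1 - GF N k.
Proof.
move=> N0 kN. have [j Ej] : exists j, N.+1 = (k + j)%N by exists (N.+1 - k)%N; rewrite subnKC.
rewrite /ft /GF.
case: j Ej => [|j] Ej.
  rewrite addn0 in Ej; subst k.
  rewrite (@bin_small N) // (@bin_small N.-1); last by lia.
  rewrite binn ltnn leqnn /= subnn.
  rewrite Fr0 /pF; field; rewrite /Fr; nzs.
rewrite addnS in Ej; case: Ej => EN; subst N.
case: k N0 kN => [|k] N0 kN.
  case: j N0 {kN} => [|j] // _.
  rewrite !bin0 /= subSS add0n subn0 /pF. rewrite ?Fr0; field; rewrite /Fr; nzs.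
case: j N0 kN => [|j] _ _.
  rewrite addn0 /= binn (@bin_small k) // (@binR' _ _ (leqnSn k.+1)) subSnn subnn !leqnn !leqnSn ?ltnSn /=.
  rewrite !FrS !Fr0 /pF; field; rewrite /Fr; nzs.
rewrite (@binR' _ _ (_ : k.+1 <= (k.+1 + j.+1).+1)%N); last by lia.
rewrite (@binR' _ _ (_ : k.+1 <= (k.+1 + j.+1))%N); last by lia.
rewrite (@binR' _ _ (_ : k.+1 <= (k.+1 + j.+1).-1)%N); last by lia.
have -> : ((k.+1 + j.+1).+1 - k.+1 = j.+2)%N by lia.
have -> : ((k.+1 + j.+1) - k.+1 = j.+1)%N by lia.
have -> : ((k.+1 + j.+1).-1 - k.+1 = j)%N by lia.
have -> : ((k.+1 + j.+1).+1 - k.+2 = j.+1)%N by lia.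
have -> : (k.+2 <= (k.+1 + j.+1).+1)%N by lia.
have -> : (k.+1 <= (k.+1 + j.+1).+1)%N by lia.
rewrite !addSn !addnS; set s := (k + j)%N.
rewrite /= !FrS /pF; rewrite {}/s; field; rewrite /Fr; nzs.
Qed.
Definition bt n k : rat := if (k <= n)%N then Fr (n + 2*k) / (Fr (n-k) * Fr k ^+3) * (-4)^+(n-k) else 0.
Definition GB N k : rat := if (0<k)%N && (k <= N.+1)%N then
  -3*(3*N%:R+2) * Fr (N + 2*k).-1 / (Fr (N.+1-k) * Fr k.-1 ^+3) * (-4)^+(N.+1-k) else 0.
Lemma bt_in n k : (k <= n)%N -> bt n k = Fr (n + 2*k) / (Fr (n-k) * Fr k ^+3) * (-4)^+(n-k).
Proof. by rewrite /bt => ->. Qed.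
Lemma bt_out n k : (n < k)%N -> bt n k = 0.
Proof. by rewrite /bt ltnNge => /negbTE ->. Qed.
Lemma GB_in N k : (0 < k)%N -> (k <= N.+1)%N -> GB N k =
  -3*(3*N%:R+2) * Fr (N + 2*k).-1 / (Fr (N.+1-k) * Fr k.-1 ^+3) * (-4)^+(N.+1-k).
Proof. by rewrite /GB => -> ->. Qed.
Lemma GB_out N k : (k == 0)%N || (N.+1 < k)%N -> GB N k = 0.
Proof. move=> h; rewrite /GB; case: ifP => // /andP[h1 h2]; lia. Qed.

Lemma b_step N k : (0 < N)%N -> (k <= N.+1)%N ->
 (N.+1%:R)^+2 * bt N.+1 k - (7*N%:R^+2 + 7*N%:R + 2) * bt N k - 8 * N%:R^+2 * bt N.-1 k
  = GB N k.+1 - GB N k.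
Proof.
move=> N0 kN.
have [->|kN1] := eqVneq k N.+1.
  rewrite bt_in // bt_out // bt_out; last by lia.
  rewrite GB_out; last by rewrite ltnSn orbT.
  rewrite GB_in // subnn [N.+1.-1]/=.
  have -> : (N.+1 + 2*N.+1 = (3*N).+3)%N by lia.
  have -> : ((N + 2*N.+1).-1 = (3*N).+1)%N by lia.
  rewrite !FrS !Fr0 expr0; field; rewrite /Fr; nzs.
case: N N0 kN kN1 => [//|N] _ kN kN1.
have [->|kN2] := eqVneq k N.+1.
  rewrite bt_in // bt_in // bt_out //= GB_in // GB_in //.
  rewrite !subnn subSnn [N.+2.-1]/= [N.+1.-1]/=.
  have -> : ((N.+1 + 2*N.+2).-1 = (3*N).+4)%N by lia.
  have -> : ((N.+1 + 2*N.+1).-1 = (3*N).+2)%N by lia.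
  have -> : (N.+2 + 2*N.+1 = (3*N).+4)%N by lia.
  have -> : (N.+1 + 2*N.+1 = (3*N).+3)%N by lia.
  rewrite !FrS !Fr0 expr0 expr1; field; rewrite /Fr; nzs.
case: k kN kN1 kN2 => [|k] kN kN1 kN2.
  rewrite !bt_in // GB_in // GB_out // !subn0 !addn0 [N.+1.-1]/= subSS subn0.
  have -> : ((N.+1 + 2*1).-1 = N.+2)%N by lia.
  rewrite !FrS !Fr0 !exprS; field; rewrite /Fr; nzs.
have [j EN] : exists j, N = (k + j)%N by exists (N - k)%N; lia.
subst N.
case: j kN2 kN1 kN => [|j] kN2 kN1 kN; first by rewrite addn0 eqxx in kN2.
rewrite !bt_in; try lia. rewrite !GB_in; try lia.
have -> : ((k + j.+1).+1.-1 = k + j.+1)%N by [].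
have -> : (k.+2.-1 = k.+1)%N by [].
have -> : (k.+1.-1 = k)%N by [].
have -> : (((k + j.+1).+1 + 2 * k.+2).-1 = (3*k+j).+4.+1)%N by lia.
have -> : (((k + j.+1).+1 + 2 * k.+1).-1 = (3*k+j).+3)%N by lia.
have -> : ((k + j.+1).+2 + 2 * k.+1 = (3*k+j).+4.+1)%N by lia.
have -> : ((k + j.+1).+1 + 2 * k.+1 = (3*k+j).+4)%N by lia.
have -> : ((k + j.+1) + 2 * k.+1 = (3*k+j).+3)%N by lia.
have -> : ((k + j.+1).+2 - k.+1 = j.+2)%N by lia.
have -> : ((k + j.+1).+1 - k.+1 = j.+1)%N by lia.
have -> : ((k + j.+1) - k.+1 = j)%N by lia.
have -> : ((k + j.+1).+2 - k.+2 = j.+1)%N by lia.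
rewrite !FrS !exprS; field; rewrite /Fr; nzs.
Qed.



Lemma sum_ext (t : nat -> rat) a b : (a <= b)%N -> (forall k, (a <= k)%N -> t k = 0) ->
  \sum_(0 <= k < b) t k = \sum_(0 <= k < a) t k.
Proof.
move=> ab h; rewrite (@big_cat_nat _ _ _ a 0 b _ _ (leq0n a) ab) /=.
rewrite [X in _ + X](_ : _ = 0) ?addr0 //.
by rewrite big_nat_cond; apply: big1 => k /andP[/andP[hk _] _]; exact: h.
Qed.

Lemma fR_sum n : (franel n)%:R = \sum_(0 <= k < n.+1) ft n k :> rat.
Proof. by rewrite /franel natr_sum; apply: eq_bigr => k _; rewrite natrX. Qed.

Lemma ft_out n k : (n < k)%N -> ft n k = 0.
Proof. by move=> h; rewrite /ft bin_small // exprS mul0r. Qed.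

Lemma franel_rec N : (0 < N)%N -> N.+1%:R^+2 * (franel N.+1)%:R =
  (7*N%:R^+2+7*N%:R+2) * (franel N)%:R + 8*N%:R^+2 * (franel N.-1)%:R :> rat.
Proof.
move=> N0.
have H : \sum_(0 <= k < N.+2) (N.+1%:R^+2 * ft N.+1 k - (7*N%:R^+2 + 7*N%:R + 2) * ft N k
     - 8 * N%:R^+2 * ft N.-1 k) = GF N N.+2 - GF N 0.
  by apply: telescope_sumr_eq => // k /andP[_ hk]; exact: franel_step.
have e1 : \sum_(0 <= k < N.+2) ft N k = \sum_(0 <= k < N.+1) ft N k.
  by apply: sum_ext => // k hk; exact: ft_out.
have e2 : \sum_(0 <= k < N.+2) ft N.-1 k = \sum_(0 <= k < N.-1.+1) ft N.-1 k.
  by apply: sum_ext => [|k hk]; [lia | apply: ft_out; lia].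
have g0 : GF N 0 = 0 by [].
have g1 : GF N N.+2 = 0 by rewrite /GF ltnn andbF.
rewrite g0 g1 subr0 !sumrB -!mulr_sumr e1 e2 in H.
move/subr0_eq/eqP: H; rewrite subr_eq => /eqP H.
by rewrite !fR_sum H addrC.
Qed.

Definition Ysum n := \sum_(0 <= k < n.+1) bt n k.

Lemma Y_rec N : (0 < N)%N -> N.+1%:R^+2 * Ysum N.+1 =
  (7*N%:R^+2+7*N%:R+2) * Ysum N + 8*N%:R^+2 * Ysum N.-1.
Proof.
move=> N0.
have H : \sum_(0 <= k < N.+2) (N.+1%:R^+2 * bt N.+1 k - (7*N%:R^+2 + 7*N%:R + 2) * bt N k
     - 8 * N%:R^+2 * bt N.-1 k) = GB N N.+2 - GB N 0.
  by apply: telescope_sumr_eq => // k /andP[_ hk]; exact: b_step.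
have e1 : \sum_(0 <= k < N.+2) bt N k = \sum_(0 <= k < N.+1) bt N k.
  by apply: sum_ext => // k hk; exact: bt_out.
have e2 : \sum_(0 <= k < N.+2) bt N.-1 k = \sum_(0 <= k < N.-1.+1) bt N.-1 k.
  by apply: sum_ext => [|k hk]; [lia | apply: bt_out; lia].
have g0 : GB N 0 = 0 by [].
have g1 : GB N N.+2 = 0 by rewrite /GB ltnn andbF.
rewrite g0 g1 subr0 !sumrB -!mulr_sumr e1 e2 in H.
move/subr0_eq/eqP: H; rewrite subr_eq => /eqP H.
by rewrite /Ysum H addrC.
Qed.

Lemma fY n : (franel n)%:R = Ysum n.
Proof.
elim/ltn_ind: n => -[|[|n]] IH.
- rewrite fR_sum /Ysum !big_nat1 /ft bin0 expr1n bt_in // !Fr0 expr0; field.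
- rewrite fR_sum /Ysum !big_nat_recr //= !big_geq // !add0r /ft bin0 binn expr1n bt_in // bt_in //.
- have h : (n.+2%:R ^+ 2 : rat) != 0 by rewrite expf_neq0 // pnatr_eq0.
  apply: (mulfI h); rewrite (@franel_rec n.+1 (ltn0Sn _)) (@Y_rec n.+1 (ltn0Sn _)) /= !IH //.
Qed.



Definition sb n k : rat := bt n k * (n%:R * (k%:R - n%:R) / (8 * (2*k+1)%:R)).

Lemma Bterm n k : (k <= n.+1)%N ->
  2 * (2*n+1)%:R / n.+1%:R * sb n.+1 k + 16 * sb n k = (3*n+1)%:R * bt n k.
Proof.
move=> kn.
have [->|kn1] := eqVneq k n.+1.
  by rewrite /sb (@bt_out n) // subrr; ring.
have [j ->] : exists j, n = (k + j)%N by exists (n - k)%N; lia.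
rewrite /sb !bt_in; try lia.
have -> : ((k + j).+1 + 2 * k = (3*k+j).+1)%N by lia.
have -> : ((k + j) + 2 * k = (3*k+j))%N by lia.
have -> : ((k + j).+1 - k = j.+1)%N by lia.
have -> : ((k + j) - k = j)%N by lia.
rewrite !FrS !exprS; field; rewrite /Fr; nzs.
Qed.

Lemma termR n k : (k <= n)%N ->
  ('C(n + 2*k, 3*k) * 'C(3*k,k) * 'C(2*k,k))%:R = Fr (n+2*k) / (Fr (n-k) * Fr k ^+ 3) :> rat.
Proof.
move=> kn; rewrite !natrM (@binR' (n + 2*k) (3*k)); last by lia.
rewrite (@binR' (3*k) k); last by lia.
rewrite (@binR' (2*k) k); last by lia.
have -> : (n + 2*k - 3*k = n - k)%N by lia.
have -> : (3*k - k = 2*k)%N by lia.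
have -> : (2*k - k = k)%N by lia.
field; rewrite /Fr; nzs.
Qed.

Lemma RHS_eq n :
    \sum_(0 <= k < n)
      (('C(n + 2 * k, 3 * k) * 'C(3 * k, k) * 'C(2 * k, k))%:R
       * ((n%:R : rat) * ((k%:~R : rat) - n%:~R) * (-4 : rat) ^+ (n - k)
          / (8 * (2 * k + 1)%:R)))
  = \sum_(0 <= k < n.+1) sb n k.
Proof.
rewrite [RHS]big_nat_recr //= (_ : sb n n = 0) ?addr0; last by rewrite /sb subrr !(mulr0, mul0r).
apply: eq_big_nat => k /andP[_ hk].
have hk' : (k <= n)%N by exact: ltnW.
rewrite (@termR n k hk') /sb (@bt_in n k hk').
set A := Fr _ / _; set e := (-4) ^+ _.
have ci : forall m : nat, (m%:~R : rat) = m%:R by [].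
rewrite (ci k) (ci n); ring.
Qed.
Lemma binC2 n : ('C(2*n.+1, n.+1))%:R = ('C(2*n,n))%:R * (2*(2*n+1)%:R / n.+1%:R) :> rat.
Proof.
rewrite !mul2n -!addnn !binR.
have -> : (n.+1 + n.+1 = (n+n).+2)%N by lia.
rewrite !FrS; field; rewrite /Fr; nzs.
Qed.

Definition LL n : rat := \sum_(0 <= m < n)
     ((3 * m + 1)%:R * (-16 : rat) ^+ (n - m - 1) * ('C(2 * m, m))%:R * (franel m)%:R).

Lemma L_S n : LL n.+1 = -16 * LL n + (3*n+1)%:R * ('C(2*n,n))%:R * (franel n)%:R.
Proof.
rewrite /LL big_nat_recr //= mulr_sumr.
have -> : (n.+1 - n - 1 = 0)%N by lia.
rewrite expr0 mulr1; congr (_ + _).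
apply: eq_big_nat => m /andP[_ hm].
have -> : (n.+1 - m - 1 = (n - m - 1).+1)%N by lia.
rewrite exprS; ring.
Qed.

Definition RR n : rat := ('C(2*n,n))%:R * \sum_(0 <= k < n.+1) sb n k.

Lemma R_S n : RR n.+1 + 16 * RR n = (3*n+1)%:R * ('C(2*n,n))%:R * (franel n)%:R.
Proof.
rewrite /RR binC2 fY /Ysum.
have e : \sum_(0 <= k < n.+1) sb n k = \sum_(0 <= k < n.+2) sb n k.
  by rewrite (@sum_ext _ n.+1 n.+2) // => k hk; rewrite /sb bt_out ?mul0r.
have e2 : \sum_(0 <= k < n.+1) bt n k = \sum_(0 <= k < n.+2) bt n k.
  by rewrite (@sum_ext _ n.+1 n.+2) // => k hk; rewrite bt_out.
have H : \sum_(0 <= k < n.+2) (2 * (2*n+1)%:R / n.+1%:R * sb n.+1 k + 16 * sb n k)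
   = \sum_(0 <= k < n.+2) (3*n+1)%:R * bt n k.
  by apply: eq_big_nat => k /andP[_ hk]; apply: Bterm.
rewrite big_split /= -!mulr_sumr in H.
rewrite e e2.
transitivity (('C(2*n,n))%:R * (2 * (2*n+1)%:R / n.+1%:R * \sum_(0 <= k < n.+2) sb n.+1 k
   + 16 * \sum_(0 <= k < n.+2) sb n k)); first ring.
rewrite H; ring.
Qed.

Lemma LR n : LL n = RR n.
Proof.
elim: n => [|n IH].
  by rewrite /LL /RR big_nat1 big_geq // /sb !(mulr0, mul0r).
apply: (addIr (16 * RR n)); rewrite R_S L_S IH; ring.
Qed.

Theorem mainTheorem6 (n : nat) (hn : (1 <= n)%N) :
  \sum_(0 <= m < n)
     ((3 * m + 1)%:R * (-16 : rat) ^+ (n - m - 1) * ('C(2 * m, m))%:R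
        * (franel m)%:R)
  = ('C(2 * n, n))%:R *
    \sum_(0 <= k < n)
      (('C(n + 2 * k, 3 * k) * 'C(3 * k, k) * 'C(2 * k, k))%:R
       * ((n%:R : rat) * ((k%:~R : rat) - n%:~R) * (-4 : rat) ^+ (n - k)
          / (8 * (2 * k + 1)%:R))).
Proof. by rewrite RHS_eq -/(LL n) LR. Qed.
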